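(* Let $R \subseteq S \subseteq T$ be commutative ring extensions, and let $X = \{P \in \operatorname{Spec} S : P \cap R \text{ is a maximal ideal of } R\}$. Suppose that the contraction map $\operatorname{Spec} S \setminus X \to \operatorname{Spec} R \setminus \operatorname{Max} R$ is injective and that $R \subseteq S$ satisfies INC. If $R \subseteq T$ satisfies going-down, then so does $S \subseteq T$.
   Context: A ring extension $A \subseteq B$ satisfies going-down if whenever $\mathfrak{p} \subset \mathfrak{q}$ are primes of $A$ and $Q$ is a prime of $B$ with $Q \cap A = \mathfrak{q}$, there is a prime $P \subseteq Q$ of $B$ with $P \cap A = \mathfrak{p}$. It satisfies INC (incomparability) if distinct comparable primes $P \subsetneq P'$ of $B$ never have the same contraction to $A$. $\operatorname{Max} R$ denotes the set of maximal ideals of $R$. *)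

(* Defs.v *)
From mathcomp Require Import all_boot all_algebra.
Set Implicit Arguments. Unset Strict Implicit. Unset Printing Implicit Defensive.
Import GRing.Theory.
Local Open Scope ring_scope.

Definition is_ideal (A : comNzRingType) (I : A -> Prop) : Prop :=
  I 0 /\ (forall x y, I x -> I y -> I (x + y)) /\ (forall a x, I x -> I (a * x)).

Definition is_prime (A : comNzRingType) (I : A -> Prop) : Prop :=
  is_ideal I /\ ~ I 1 /\ (forall x y, I (x * y) -> I x \/ I y).

Definition is_maximal (A : comNzRingType) (I : A -> Prop) : Prop :=
  is_ideal I /\ ~ I 1 /\
  (forall J : A -> Prop, is_ideal J -> ~ J 1 -> (forall x, I x -> J x) ->
     forall x, J x -> I x).

Definition contr (A B : comNzRingType) (f : A -> B) (Q : B -> Prop) : A -> Prop :=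
  fun x => Q (f x).

Definition pincl (A : Type) (P Q : A -> Prop) : Prop := forall x, P x -> Q x.
Definition peq (A : Type) (P Q : A -> Prop) : Prop := forall x, P x <-> Q x.

Definition going_down (A B : comNzRingType) (f : A -> B) : Prop :=
  forall (p q : A -> Prop) (Q : B -> Prop),
    is_prime p -> is_prime q -> pincl p q ->
    is_prime Q -> peq (contr f Q) q ->
    exists P : B -> Prop, is_prime P /\ pincl P Q /\ peq (contr f P) p.

Definition INC (A B : comNzRingType) (f : A -> B) : Prop :=
  forall P P' : B -> Prop, is_prime P -> is_prime P' -> pincl P P' ->
    peq (contr f P) (contr f P') -> peq P P'.

(* Main.v *)
Require Import Defs.
From mathcomp Require Import all_boot all_algebra.
From Stdlib Require Import Classical.
Import GRing.Theory.
Local Open Scope ring_scope.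

Lemma contr_prime (A B : comNzRingType) (f : {rmorphism A -> B}) (Q : B -> Prop) :
  is_prime Q -> is_prime (contr f Q).
Proof.
move=> [[H0 [HD HM]] [H1 Hp]]; rewrite /contr; split; [split; [|split]|split].
- by rewrite rmorph0.
- by move=> x y Hx Hy; rewrite rmorphD; apply: HD.
- by move=> a x Hx; rewrite rmorphM; apply: HM.
- by rewrite rmorph1.
- by move=> x y; rewrite rmorphM; apply: Hp.
Qed.

Lemma max_peq (A : comNzRingType) (I J : A -> Prop) :
  is_maximal I -> peq I J -> is_maximal J.
Proof.
move=> [[H0 [HD HM]] [H1 Hm]] E; split; [split; [|split]|split].
- by apply/E.
- by move=> x y /E Hx /E Hy; apply/E; apply: HD.
- by move=> a x /E Hx; apply/E; apply: HM.
- by move/E.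
- move=> K HK HK1 HJK x Kx; apply/E; apply: (Hm K HK HK1) => // y /E; exact: HJK.
Qed.

Theorem lemma5p1 (R S T : comNzRingType)
  (f : {rmorphism R -> S}) (g : {rmorphism S -> T})
  (f_inj : injective f) (g_inj : injective g)
  (Hinj : forall P1 P2 : S -> Prop, is_prime P1 -> is_prime P2 ->
     ~ is_maximal (contr f P1) -> ~ is_maximal (contr f P2) ->
     peq (contr f P1) (contr f P2) -> peq P1 P2)
  (Hinc : INC f) :
  going_down (g \o f) -> going_down g.
Proof.
move=> GD p q Q pp pq pq_incl PQ EQ.
have pp0 := @contr_prime _ _ f _ pp.
have pq0 := @contr_prime _ _ f _ pq.
have E0 : peq (contr (g \o f) Q) (contr f q).
  by move=> x; rewrite /contr /=; apply: (EQ (f x)).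
have incl0 : pincl (contr f p) (contr f q) by move=> x; apply: pq_incl.
have [P [PP [PQincl EP]]] := GD _ _ Q pp0 pq0 incl0 PQ E0.
case: (classic (is_maximal (contr f p))) => Hmax.
- (* p0 maximal: p0 = q0, so p = q by INC *)
  have Epq : peq (contr f p) (contr f q).
    move=> x; split; first exact: incl0.
    case: Hmax => _ [_ Hm]; apply: Hm => //; [exact: pq0.1|exact: pq0.2.1].
  have := Hinc p q pp pq pq_incl Epq => Eq.
  exists Q; split => //; split; first by [].
  by move=> x; rewrite (EQ x); symmetry; apply: Eq.
- have PP' := @contr_prime _ _ g _ PP.
  exists P; split => //; split => //.
  have E1 : peq (contr f (contr g P)) (contr f p) by move=> x; apply: EP.
  have Hmax' : ~ is_maximal (contr f (contr g P)).
    move=> H; apply: Hmax; apply: (@max_peq _ _ _ H) => x; split; by move/E1.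
  exact: (Hinj _ _ PP' pp Hmax' Hmax E1).
Qed.
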